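(* Let $X$ be a compact Hausdorff space, $\varphi:X\to X$ a homeomorphism, and $F\in C(X)\rtimes_\varphi\mathbb{Z}^+$. For every $x\in X$, $$\|\Pi_x(F)\|=\sup\{\|\pi_y(F)\| : y\in\mathrm{Orbit}(x)\},$$ where $\mathrm{Orbit}(x)=\{\varphi^n(x):n\in\mathbb{Z}\}$.
   Context: Semicrossed product: let $\mathcal{A}_0$ be the algebra generated by $C(X)$ and a symbol $U$ subject to $fU=U(f\circ\varphi)$, with elements $\sum_{n=0}^NU^nf_n$, $f_n\in C(X)$; $C(X)\rtimes_\varphi\mathbb{Z}^+$ is its completion in the norm $\sup_\pi\|\pi(F)\|$ over homomorphisms $\pi$ into $\mathcal{B}(\mathcal{H})$ that are $*$-representations on $C(X)$ with $\pi(U)$ an isometry (these extend to the completion). For $y\in X$ set $y_n=\varphi^{n-1}(y)$ and define $\pi_y$ on $\ell^2(\mathbb{N})$ by $\pi_y(f)(z_1,z_2,\dots)=(f(y_1)z_1,f(y_2)z_2,\dots)$, $\pi_y(U)(z_1,z_2,\dots)=(0,z_1,z_2,\dots)$. $\Pi_x$ is the representation on $\ell^2(\mathbb{Z})$ with $(\Pi_x(U)\xi)_n=\xi_{n-1}$ (bilateral right shift) and $(\Pi_x(f)\xi)_n=f(\varphi^n(x))\xi_n$. *)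

(* Defs.v *)
From HB Require Import structures.
From mathcomp Require Import all_boot all_order all_algebra.
From mathcomp Require Import all_classical all_reals all_analysis.
From mathcomp Require Import complex.
Set Implicit Arguments. Unset Strict Implicit. Unset Printing Implicit Defensive.
Import Order.TTheory GRing.Theory Num.Theory.
Import numFieldNormedType.Exports.
Local Open Scope ring_scope.
Local Open Scope classical_set_scope.

Section SemicrossedDefs.
Variable R : realType.

Definition cabs (z : R[i]) : R := complex.Re `|z|.
Definition cabs2 (z : R[i]) : R := cabs z ^+ 2.

Record hilbert := Hilbert {
  hcar : lmodType R[i];
  hinner : hcar -> hcar -> R[i];
  hinner_linear : forall (a : R[i]) (u v w : hcar),
      hinner (a *: u + v) w = a * hinner u w + hinner v w;
  hinner_sym : forall u v : hcar, hinner u v = conjc (hinner v u);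
  hinner_ge0 : forall u : hcar, 0 <= hinner u u;
  hinner_def : forall u : hcar, hinner u u = 0 -> u = 0;
  hcomplete : forall s : nat -> hcar,
      (forall e : R, 0 < e -> exists N, forall m n, (N <= m)%N -> (N <= n)%N ->
          complex.Re (hinner (s m - s n) (s m - s n)) < e) ->
      exists l : hcar, forall e : R, 0 < e -> exists N, forall n, (N <= n)%N ->
          complex.Re (hinner (s n - l) (s n - l)) < e
}.

Definition hn2 (H : hilbert) (u : hcar H) : R := complex.Re (hinner u u).

Definition linear_op (H : hilbert) (T : hcar H -> hcar H) :=
  forall (a : R[i]) (u v : hcar H), T (a *: u + v) = a *: T u + T v.
Definition bounded_op (H : hilbert) (T : hcar H -> hcar H) :=
  exists c : R, forall u, hn2 (T u) <= c * hn2 u.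

Variable X : topologicalType.

Definition ccont (f : X -> R[i]) :=
  forall (x : X) (e : R), 0 < e -> \forall z \near x, cabs (f z - f x) < e.

Variables phi psi : X -> X.   (* psi is the inverse of the homeomorphism phi *)

(** A representation pi of A_0 into B(H) which is a *-representation on C(X)
    with pi(U) an isometry; it is given by rho = pi|_{C(X)} and V = pi(U),
    subject to the covariance relation  rho(f) V = V rho(f o phi)
    (the image of the relation fU = U(f o phi)). *)
Definition cov_rep (H : hilbert) (rho : (X -> R[i]) -> hcar H -> hcar H)
    (V : hcar H -> hcar H) :=
  (forall f, ccont f -> linear_op (rho f) /\ bounded_op (rho f)) /\
      (forall f g, ccont f -> ccont g -> forall u,
        rho (fun x => f x + g x) u = rho f u + rho g u) /\
      (forall (a : R[i]) f, ccont f -> forall u,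
        rho (fun x => a * f x) u = a *: rho f u) /\
      (forall f g, ccont f -> ccont g -> forall u,
        rho (fun x => f x * g x) u = rho f (rho g u)) /\
      (forall f, ccont f -> forall u v,
        hinner (rho f u) v = hinner u (rho (fun x => conjc (f x)) v)) /\
      (linear_op V /\ (forall u v, hinner (V u) (V v) = hinner u v)) /\
      (forall f, ccont f -> forall u, rho f (V u) = V (rho (fun x => f (phi x)) u)).

(** elements of A_0 : F = sum_{n < size G} U^n (nth 0 G n) *)
Definition A0_elt (G : seq (X -> R[i])) := forall i, ccont (nth (fun=> 0) G i).

Definition rep_apply (H : hilbert) (rho : (X -> R[i]) -> hcar H -> hcar H)
    (V : hcar H -> hcar H) (G : seq (X -> R[i])) (u : hcar H) : hcar H :=
  \sum_(n < size G) iter n V (rho (nth (fun=> 0) G n) u).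

(** Cauchy sequences of A_0 for the universal norm sup_pi ||pi(.)||;
    the semicrossed product is the completion, i.e. classes of such sequences. *)
Definition univ_cauchy (Fs : nat -> seq (X -> R[i])) :=
  forall e : R, 0 < e -> exists N, forall m n, (N <= m)%N -> (N <= n)%N ->
    forall (H : hilbert) rho V, cov_rep rho V -> forall u : hcar H,
      hn2 (rep_apply rho V (Fs m) u - rep_apply rho V (Fs n) u) <= e ^+ 2 * hn2 u.

Definition zit (n : int) (x : X) : X :=
  match n with Posz k => iter k phi x | Negz k => iter k.+1 psi x end.
Definition zorbit (x : X) : set X := [set zit n x | n in [set: int]].

(** l^2(N) (coordinate k <-> z_{k+1}) and l^2(Z) *)
Definition l2N (xi : nat -> R[i]) := cvgn (series (fun k => cabs2 (xi k))).
Definition normN (xi : nat -> R[i]) : R :=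
  Num.sqrt (limn (series (fun k => cabs2 (xi k)))).
Definition l2Z (xi : int -> R[i]) :=
  cvgn (series (fun k => cabs2 (xi (Posz k)))) /\
  cvgn (series (fun k => cabs2 (xi (Negz k)))).
Definition normZ (xi : int -> R[i]) : R :=
  Num.sqrt (limn (series (fun k => cabs2 (xi (Posz k)))) +
            limn (series (fun k => cabs2 (xi (Negz k))))).

Definition opnormN (T : (nat -> R[i]) -> (nat -> R[i])) : R :=
  sup [set normN (T xi) | xi in [set xi | l2N xi /\ normN xi <= 1]].
Definition opnormZ (T : (int -> R[i]) -> (int -> R[i])) : R :=
  sup [set normZ (T xi) | xi in [set xi | l2Z xi /\ normZ xi <= 1]].

Definition piyU (xi : nat -> R[i]) : nat -> R[i] :=
  fun k => if k is k'.+1 then xi k' else 0.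
Definition piyf (y : X) (f : X -> R[i]) (xi : nat -> R[i]) : nat -> R[i] :=
  fun k => f (iter k phi y) * xi k.
Definition pi_y (y : X) (G : seq (X -> R[i])) (xi : nat -> R[i]) : nat -> R[i] :=
  fun k => \sum_(n < size G) iter n piyU (piyf y (nth (fun=> 0) G n) xi) k.

Definition PiU (xi : int -> R[i]) : int -> R[i] := fun n => xi (n - 1).
Definition Pif (x : X) (f : X -> R[i]) (xi : int -> R[i]) : int -> R[i] :=
  fun n => f (zit n x) * xi n.
Definition Pi_x (x : X) (G : seq (X -> R[i])) (xi : int -> R[i]) : int -> R[i] :=
  fun n => \sum_(m < size G) iter m PiU (Pif x (nth (fun=> 0) G m) xi) n.

(** norms of the (extended) representations at F = lim_k Fs k *)
Definition norm_pi_y (y : X) (Fs : nat -> seq (X -> R[i])) : R :=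
  limn (fun k => opnormN (pi_y y (Fs k))).
Definition norm_Pi_x (x : X) (Fs : nat -> seq (X -> R[i])) : R :=
  limn (fun k => opnormZ (Pi_x x (Fs k))).

End SemicrossedDefs.

(* Main.v *)
Require Import Defs.
From HB Require Import structures.
From mathcomp Require Import all_boot all_order all_algebra.
From mathcomp Require Import all_classical all_reals all_analysis.
From mathcomp Require Import complex.
From mathcomp Require Import ring lra zify.
Set Implicit Arguments. Unset Strict Implicit. Unset Printing Implicit Defensive.
Import Order.TTheory GRing.Theory Num.Theory.
Import numFieldNormedType.Exports.
Local Open Scope ring_scope.
Local Open Scope classical_set_scope.
Section A.
Variable R : realType.
Implicit Types a b : nat -> R.

Definition summ a := cvgn (series a).
Definition S a := limn (series a).

Lemma series_nd a : (forall k, 0 <= a k) -> nondecreasing_seq (series a).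
Proof. by move=> a0; apply: (@nondecreasing_series _ a xpredT 0%N) => k _ _; exact: a0. Qed.

Lemma ss_partial a : (forall k, 0 <= a k) -> summ a -> forall n, series a n <= S a.
Proof. move=> a0 sa n; exact: nondecreasing_cvgn_le (series_nd a0) sa n. Qed.

Lemma ss_bound a M : (forall k, 0 <= a k) -> (forall n, series a n <= M) ->
  summ a /\ S a <= M.
Proof.
move=> a0 aM.
have sa : summ a.
  apply: nondecreasing_is_cvgn; first exact: series_nd.
  by exists M => _ [n _ <-].
split=> //; rewrite /S.
apply: limr_le => //; exact: nearW.
Qed.

Lemma ss_ge0 a : (forall k, 0 <= a k) -> summ a -> 0 <= S a.
Proof. move=> a0 sa; apply: le_trans (ss_partial a0 sa 0%N); by rewrite /series /= big_geq. Qed.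

Lemma ss_le a b : (forall k, 0 <= a k) -> (forall k, a k <= b k) -> summ b ->
  summ a /\ S a <= S b.
Proof.
move=> a0 ab sb; apply: ss_bound => // n.
apply: le_trans (ss_partial _ sb n); last by move=> k; exact: le_trans (ab k).
by rewrite /series /=; apply: ler_sum => k _; exact: ab.
Qed.

Lemma ss_eq0 a : (forall k, 0 <= a k) -> summ a -> S a = 0 -> forall k, a k = 0.
Proof.
move=> a0 sa Sa k; apply/eqP; rewrite eq_le a0 andbT.
have := ss_partial a0 sa k.+1; rewrite Sa /series /= big_nat_recr //=.
move=> h; apply: le_trans h; rewrite lerDr; apply: sumr_ge0 => i _; exact: a0.
Qed.

Lemma seriesD_shift a m n : series a (n + m)%N = series a m + series (fun k => a (k + m)%N) n.
Proof.
rewrite series_addn; congr (_ + _).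
by rewrite -{1}[m]add0n big_addn addnK.
Qed.

Lemma ss_shift a m : (forall k, 0 <= a k) -> summ a ->
  summ (fun k => a (k + m)%N) /\ S a = series a m + S (fun k => a (k + m)%N).
Proof.
move=> a0 sa.
have sm : summ (fun k => a (k + m)%N).
  apply: (proj1 (@ss_bound _ (S a) _ _)) => [k|n]; first exact: a0.
  apply: le_trans (ss_partial a0 sa (n + m)).
  rewrite seriesD_shift lerDr /series /=; apply: sumr_ge0 => i _; exact: a0.
split=> //.
have h : (fun n => series a m + series (fun k => a (k + m)%N) n) @ \oo -->
   series a m + S (fun k => a (k + m)%N).
  apply: cvgD; first exact: cvg_cst.
  exact: sm.
have h2 : series a @ \oo --> series a m + S (fun k => a (k + m)%N).
  rewrite -(cvg_shiftn m); apply: cvg_trans h; apply: near_eq_cvg; apply: nearW => n /=.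
  by rewrite seriesD_shift.
exact: cvg_lim h2.
Qed.
End A.

Section B.
Variable R : realType.
Local Notation C := (R[i]).
Implicit Types z w : C.

Lemma cabs2E z : cabs2 z = complex.Re z ^+ 2 + complex.Im z ^+ 2.
Proof.
rewrite /cabs2 /cabs normc_def /=.
by rewrite sqr_sqrtr // addr_ge0 // sqr_ge0.
Qed.

Lemma cabs2_ge0 z : 0 <= cabs2 z.
Proof. by rewrite cabs2E addr_ge0 // sqr_ge0. Qed.

Lemma cabs2D z w : cabs2 (z + w) <= 2 * cabs2 z + 2 * cabs2 w.
Proof.
case: z => a b; case: w => c d; rewrite !cabs2E /=.
have h1 : (a + c) ^+ 2 <= 2 * a ^+ 2 + 2 * c ^+ 2.
  by rewrite -subr_ge0 (_ : _ - _ = (a - c) ^+ 2) ?sqr_ge0 //; ring.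
have h2 : (b + d) ^+ 2 <= 2 * b ^+ 2 + 2 * d ^+ 2.
  by rewrite -subr_ge0 (_ : _ - _ = (b - d) ^+ 2) ?sqr_ge0 //; ring.
rewrite (_ : 2 * (a ^+ 2 + b ^+ 2) + 2 * (c ^+ 2 + d ^+ 2) =
   (2 * a ^+ 2 + 2 * c ^+ 2) + (2 * b ^+ 2 + 2 * d ^+ 2)); last by ring.
exact: lerD.
Qed.

Lemma cabs2M z w : cabs2 (z * w) = cabs2 z * cabs2 w.
Proof. case: z => a b; case: w => c d; rewrite !cabs2E /=; ring. Qed.

Lemma cabs2N z : cabs2 (- z) = cabs2 z.
Proof. case: z => a b; rewrite !cabs2E /=; ring. Qed.

Lemma cabs2_0 : cabs2 (0 : C) = 0.
Proof. by rewrite cabs2E /= expr0n /= addr0. Qed.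

Lemma cabs2_eq0 z : cabs2 z = 0 -> z = 0.
Proof.
case: z => a b; rewrite cabs2E /= => h.
have ha : a ^+ 2 = 0.
  apply/eqP; rewrite eq_le sqr_ge0 andbT -h lerDl sqr_ge0 //.
have hb : b ^+ 2 = 0.
  apply/eqP; rewrite eq_le sqr_ge0 andbT -h lerDr sqr_ge0 //.
move/eqP: ha; rewrite sqrf_eq0 => /eqP ->; move/eqP: hb; rewrite sqrf_eq0 => /eqP ->.
by [].
Qed.

Lemma polarRe z w : complex.Re (z * w^*) = (cabs2 (z + w) - cabs2 (z - w)) / 4.
Proof. case: z => a b; case: w => c d; rewrite !cabs2E /=; field; done. Qed.

Lemma polarIm z w : complex.Im (z * w^*) = complex.Re (z * (w * 'i)^*).
Proof. case: z => a b; case: w => c d; rewrite /=; ring. Qed.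

End B.

Section C.
Variable R : realType.
Local Notation C := (R[i]).
Local Notation Re := (@complex.Re R).
Local Notation Im := (@complex.Im R).

Definition sq (xi : nat -> C) := fun k => cabs2 (xi k).

Lemma sq_ge0 (xi : nat -> C) k : 0 <= sq xi k. Proof. exact: cabs2_ge0. Qed.

Lemma l2N_summ (xi : nat -> C) : l2N xi = summ (sq xi). Proof. by []. Qed.

Lemma l2N_add (xi eta : nat -> C) : l2N xi -> l2N eta -> l2N (xi + eta).
Proof.
rewrite !l2N_summ => h1 h2.
have h : summ (fun k => 2 * sq xi k + 2 * sq eta k).
  rewrite /summ (_ : (fun k => _) = (2 : R) *: sq xi + (2:R) *: sq eta); last first.
    by apply: funext => k.
  apply: is_cvg_seriesD; exact: is_cvg_seriesZ.
apply: (proj1 (ss_le _ _ h)) => k; first exact: sq_ge0.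
exact: cabs2D.
Qed.

Lemma l2N_scale (a : C) (xi : nat -> C) : l2N xi -> l2N (a *: xi).
Proof.
rewrite !l2N_summ => h.
rewrite /summ (_ : sq (a *: xi) = cabs2 a *: sq xi); first exact: is_cvg_seriesZ.
by apply: funext => k; rewrite /sq /= cabs2M.
Qed.

Lemma l2N_0 : l2N (0 : nat -> C).
Proof.
rewrite l2N_summ /summ (_ : series _ = fun _ => 0); first exact: is_cvg_cst.
apply: funext => n; rewrite /series /= big1 // => k _; exact: cabs2_0.
Qed.

Definition l2p : {pred nat -> C} := fun xi => `[< l2N xi >].

Lemma l2p_submod : GRing.submod_closed l2p.
Proof.
split; first by apply/asboolP; exact: l2N_0.
move=> a u v /asboolP hu /asboolP hv; apply/asboolP.
apply: l2N_add => //; exact: l2N_scale.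
Qed.

HB.instance Definition _ := GRing.isSubmodClosed.Build _ _ l2p l2p_submod.

Record l2 := L2 { l2v :> nat -> C; l2P : l2v \in l2p }.
HB.instance Definition _ := [isSub for l2v].
HB.instance Definition _ := [Choice of l2 by <:].
HB.instance Definition _ := [SubChoice_isSubLmodule of l2 by <:].

Lemma l2_l2N (u : l2) : l2N u. Proof. exact/asboolP/l2P. Qed.

Lemma l2vD (u v : l2) k : (u + v : l2) k = u k + v k. Proof. by []. Qed.
Lemma l2vZ a (u : l2) k : (a *: u : l2) k = a * u k. Proof. by []. Qed.
Lemma l2vN (u : l2) k : (- u : l2) k = - u k. Proof. by []. Qed.
Lemma l2v0 k : (0 : l2) k = 0. Proof. by []. Qed.

End C.
Arguments l2_l2N {R} u.

Section D.
Variable R : realType.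
Local Notation C := (R[i]).
Local Notation Re := (@complex.Re R).
Local Notation Im := (@complex.Im R).

Definition ipre (u v : nat -> C) := fun k => Re (u k * (v k)^*).
Definition ipim (u v : nat -> C) := fun k => Im (u k * (v k)^*).

Lemma summ_ipre (u v : nat -> C) : l2N u -> l2N v -> summ (ipre u v).
Proof.
move=> hu hv.
have h1 := l2N_add hu hv.
have h2 := l2N_add hu (l2N_scale (a:=-1) hv).
rewrite /summ (_ : ipre u v = (4:R)^-1 *: (sq (u + v) - sq (u + (-1) *: v))).
  by apply: is_cvg_seriesZ; apply: is_cvg_seriesB.
apply: funext => k; rewrite /ipre polarRe /sq /= mulrC.
transitivity (4^-1 * (cabs2 (u k + v k) - cabs2 (u k + (-1) * v k))); last by [].
by rewrite mulN1r.
Qed.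

Lemma summ_ipim (u v : nat -> C) : l2N u -> l2N v -> summ (ipim u v).
Proof.
move=> hu hv.
have -> : ipim u v = ipre u (v * (fun=> 'i%C)).
  by apply: funext => k; rewrite /ipim /ipre polarIm.
apply: summ_ipre => //.
rewrite (_ : v * _ = 'i%C *: v); first exact: l2N_scale.
by apply: funext => k /=; rewrite mulrC.
Qed.

Definition hip (u v : l2 R) : C := Complex (S (ipre u v)) (S (ipim u v)).

Lemma S_lin (f g : nat -> R) (c : R) : summ f -> summ g ->
  S (c *: f + g) = c * S f + S g.
Proof.
move=> hf hg; rewrite /S lim_seriesD //; last exact: is_cvg_seriesZ.
by rewrite lim_seriesZ.
Qed.

Lemma S_N (f : nat -> R) : summ f -> S (- f) = - S f.
Proof. by move=> hf; rewrite /S lim_seriesN. Qed.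

Lemma hip_linear (a : C) (u v w : l2 R) : hip (a *: u + v) w = a * hip u w + hip v w.
Proof.
have hu := l2_l2N u; have hv := l2_l2N v; have hw := l2_l2N w.
have sre := summ_ipre hu hw; have sim := summ_ipim hu hw.
case: a => a b.
rewrite /hip /=; congr Complex.
- have -> : ipre (Complex a b *: u + v) w = a *: ipre u w + ((-b) *: ipim u w + ipre v w).
    apply: funext => k; rewrite /ipre /ipim.
    change (Re ((Complex a b * u k + v k) * (w k)^*) = a * Re (u k * (w k)^*) + (-b * Im (u k * (w k)^*) + Re (v k * (w k)^*))).
    case: (u k) => x y; case: (w k) => z t; case: (v k) => p q /=; ring.
  rewrite S_lin //; last by apply: is_cvg_seriesD; [exact: is_cvg_seriesZ|exact: summ_ipre].
  rewrite S_lin //; last exact: summ_ipre.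
  ring.
- have -> : ipim (Complex a b *: u + v) w = a *: ipim u w + (b *: ipre u w + ipim v w).
    apply: funext => k; rewrite /ipre /ipim.
    change (Im ((Complex a b * u k + v k) * (w k)^*) = a * Im (u k * (w k)^*) + (b * Re (u k * (w k)^*) + Im (v k * (w k)^*))).
    case: (u k) => x y; case: (w k) => z t; case: (v k) => p q /=; ring.
  rewrite S_lin //; last by apply: is_cvg_seriesD; [exact: is_cvg_seriesZ|exact: summ_ipim].
  rewrite S_lin //; last exact: summ_ipim.
  ring.
Qed.

Lemma hip_sym (u v : l2 R) : hip u v = conjc (hip v u).
Proof.
rewrite /hip /=; congr Complex.
- congr S; apply: funext => k; rewrite /ipre.
  case: (u k) => x y; case: (v k) => z t /=; ring.
- rewrite -S_N; last exact: summ_ipim (l2_l2N v) (l2_l2N u).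
  congr S; apply: funext => k; rewrite /ipim.
  change (Im (u k * (v k)^*) = - Im (v k * (u k)^*)).
  case: (u k) => x y; case: (v k) => z t /=; ring.
Qed.

Lemma ipre_self (u : nat -> C) : ipre u u = sq u.
Proof.
apply: funext => k; rewrite /ipre /sq cabs2E.
case: (u k) => x y /=; ring.
Qed.

Lemma ipim_self (u : nat -> C) : ipim u u = 0.
Proof.
apply: funext => k; rewrite /ipim.
change (Im (u k * (u k)^*) = 0).
case: (u k) => x y /=; ring.
Qed.

Lemma S0 : S (0 : nat -> R) = 0.
Proof.
rewrite /S (_ : series _ = fun _ => 0); first exact: lim_cst.
apply: funext => n; rewrite /series /= big1 //.
Qed.

Lemma hip_self (u : l2 R) : hip u u = Complex (S (sq u)) 0.
Proof. by rewrite /hip ipre_self ipim_self S0. Qed.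

Lemma hip_ge0 (u : l2 R) : 0 <= hip u u.
Proof.
rewrite hip_self lecR; apply: ss_ge0; first exact: sq_ge0.
exact: l2_l2N.
Qed.

Lemma hip_def (u : l2 R) : hip u u = 0 -> u = 0.
Proof.
rewrite hip_self => -[h].
apply: val_inj; apply: funext => k /=.
apply: cabs2_eq0; apply: (ss_eq0 (@sq_ge0 _ u) (l2_l2N u) h).
Qed.

End D.

Section E.
Variable R : realType.
Local Notation C := (R[i]).
Local Notation Re := (@complex.Re R).
Local Notation Im := (@complex.Im R).

Lemma cauchy_R (f : nat -> R) :
  (forall e : R, 0 < e -> exists N, forall m n, (N <= m)%N -> (N <= n)%N -> `|f m - f n| < e) ->
  cvgn f.
Proof.
move=> h; apply/cauchy_cvgP; apply: cauchy_exP => e e0.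
have [N hN] := h e e0; exists (f N); exists N => // n /= Nn.
by rewrite /ball /= hN.
Qed.

Lemma term_le_S (a : nat -> R) k : (forall k, 0 <= a k) -> summ a -> a k <= S a.
Proof.
move=> a0 sa; apply: le_trans (ss_partial a0 sa k.+1).
rewrite /series /= big_nat_recr //= lerDr; apply: sumr_ge0 => i _; exact: a0.
Qed.

Lemma cvg_finsum (f : nat -> nat -> R) (g : nat -> R) K :
  (forall k, f ^~ k @ \oo --> g k) ->
  (fun n => \sum_(0 <= k < K) f n k) @ \oo --> \sum_(0 <= k < K) g k.
Proof.
move=> h; elim: K => [|K IH].
  under eq_fun do rewrite big_geq //.
  rewrite big_geq //; exact: cvg_cst.
under eq_fun do rewrite big_nat_recr //.
rewrite big_nat_recr //; exact: cvgD.
Qed.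

Lemma sqr_le_cabs2_Re (z : C) : `|Re z| ^+ 2 <= cabs2 z.
Proof. by rewrite cabs2E real_normK ?num_real // lerDl sqr_ge0. Qed.

Lemma sqr_le_cabs2_Im (z : C) : `|Im z| ^+ 2 <= cabs2 z.
Proof. by rewrite cabs2E real_normK ?num_real // lerDr sqr_ge0. Qed.

Lemma lt_sqr (x e : R) : 0 <= x -> 0 < e -> x ^+ 2 < e ^+ 2 -> x < e.
Proof.
move=> x0 e0; rewrite ltr_pXn2r //; exact: ltW.
Qed.

Lemma l2_complete (s : nat -> l2 R) :
  (forall e : R, 0 < e -> exists N, forall m n, (N <= m)%N -> (N <= n)%N ->
      Re (hip (s m - s n) (s m - s n)) < e) ->
  exists l : l2 R, forall e : R, 0 < e -> exists N, forall n, (N <= n)%N ->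
      Re (hip (s n - l) (s n - l)) < e.
Proof.
move=> hc.
have hS : forall e : R, 0 < e -> exists N, forall m n, (N <= m)%N -> (N <= n)%N ->
      S (sq (fun k => s m k - s n k)) < e.
  move=> e e0; have [N hN] := hc e e0; exists N => m n hm hn.
  by have := hN m n hm hn; rewrite hip_self.
have sqm : forall m n, summ (sq (fun k => s m k - s n k)).
  move=> m n; exact: (l2_l2N (s m - s n)).
have cRe : forall k, cvgn (fun n => Re (s n k)).
  move=> k; apply: cauchy_R => e e0.
  have [N hN] := hS (e ^+ 2) (exprn_gt0 2 e0); exists N => m n hm hn.
  apply: lt_sqr => //.
  apply: le_lt_trans (hN m n hm hn).
  rewrite -raddfB /=.
  apply: le_trans (sqr_le_cabs2_Re _) _.
  exact: (@term_le_S (sq (fun k => s m k - s n k)) k (fun k => cabs2_ge0 _) (sqm m n)).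
have cIm : forall k, cvgn (fun n => Im (s n k)).
  move=> k; apply: cauchy_R => e e0.
  have [N hN] := hS (e ^+ 2) (exprn_gt0 2 e0); exists N => m n hm hn.
  apply: lt_sqr => //.
  apply: le_lt_trans (hN m n hm hn).
  rewrite -raddfB /=.
  apply: le_trans (sqr_le_cabs2_Im _) _.
  exact: (@term_le_S (sq (fun k => s m k - s n k)) k (fun k => cabs2_ge0 _) (sqm m n)).
pose l k := Complex (limn (fun n => Re (s n k))) (limn (fun n => Im (s n k))).
have key : forall e : R, 0 < e -> exists N, forall m, (N <= m)%N ->
    summ (sq (fun k => s m k - l k)) /\ S (sq (fun k => s m k - l k)) <= e.
  move=> e e0; have [N hN] := hS e e0; exists N => m hm.
  apply: ss_bound => [k|K]; first exact: cabs2_ge0.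
  have cv : (fun n => series (sq (fun k => s m k - s n k)) K) @ \oo -->
            series (sq (fun k => s m k - l k)) K.
    rewrite /series /=; apply: cvg_finsum => k.
    rewrite /sq.
    have -> : (fun n => cabs2 (s m k - s n k)) =
       (fun n => (Re (s m k) - Re (s n k)) ^+ 2 + (Im (s m k) - Im (s n k)) ^+ 2).
      by apply: funext => n; rewrite cabs2E !raddfB.
    rewrite cabs2E !raddfB /=.
    apply: cvgD; rewrite expr2; apply: cvgM; apply: cvgB; try exact: cvg_cst.
    - exact: cRe.
    - exact: cRe.
    - exact: cIm.
    - exact: cIm.
  rewrite -(cvg_lim _ cv) //.
  apply: limr_le; first by apply/cvg_ex; eexists; exact: cv.
  near=> n.
  apply: le_trans (ss_partial (fun k => cabs2_ge0 _) (sqm m n) K) _.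
  apply: ltW; apply: hN => //; near: n; exact: nbhs_infty_ge.
have [N0 hN0] := key 1 ltr01.
have l2l : l2N l.
  have [h1 _] := hN0 N0 (leqnn _).
  have h2 := l2N_add (l2_l2N (s N0)) (l2N_scale (a:=-1) h1).
  rewrite (_ : l = (s N0 : nat -> C) + (-1) *: (fun k => s N0 k - l k)) //.
  apply: funext => k; rewrite /=.
  transitivity (s N0 k + (-1) * (s N0 k - l k)); last by [].
  by rewrite mulN1r opprB addrC subrK.
have lP : l \in (@l2p R) by apply/asboolP.
exists (L2 lP) => e e0.
have [N hN] := key (e / 2) (divr_gt0 e0 (ltr0Sn _ 1)).
exists N => n hn; rewrite hip_self.
have [_ h] := hN n hn.
apply: le_lt_trans h _; first by rewrite ltr_pdivrMr // ltr_pMr // ltr1n.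
Unshelve. all: by end_near.
Qed.

End E.

Section F.
Variable R : realType.
Local Notation C := (R[i]).
Local Notation Re := (@complex.Re R).
Local Notation Im := (@complex.Im R).

Lemma cabsE (z : C) : cabs z = Num.sqrt (Re z ^+ 2 + Im z ^+ 2).
Proof. by rewrite /cabs normc_def. Qed.

Lemma cabs_ge0 (z : C) : 0 <= cabs z.
Proof. by rewrite cabsE sqrtr_ge0. Qed.

Lemma cabs_norm (z : C) : `|z| = Complex (cabs z) 0.
Proof. by rewrite normc_def cabsE. Qed.

Lemma cabsD (z w : C) : cabs (z + w) <= cabs z + cabs w.
Proof.
have := ler_normD z w; rewrite !cabs_norm lecE /= => /andP[_].
by [].
Qed.

Lemma cabsM (z w : C) : cabs (z * w) = cabs z * cabs w.
Proof.
have := normrM z w; rewrite !cabs_norm /= => -[].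
by rewrite !mulr0 !mul0r subr0.
Qed.

Lemma cabsN (z : C) : cabs (- z) = cabs z.
Proof. by case: z => a b; rewrite !cabsE /= !sqrrN. Qed.

Lemma cabs_conj (z : C) : cabs (z^*)%C = cabs z.
Proof. by case: z => a b; rewrite !cabsE /= sqrrN. Qed.

Lemma cabs2_cabs (z : C) : cabs2 z = cabs z ^+ 2.
Proof. by []. Qed.

Lemma cabsB (z w : C) : cabs z <= cabs (z - w) + cabs w.
Proof. by have := cabsD (z - w) w; rewrite subrK. Qed.

Variable X : topologicalType.
Hypothesis Xcpt : compact [set: X].

Lemma ccont_bounded (f : X -> C) : ccont f -> exists M : R, forall x, cabs (f x) <= M.
Proof.
move=> cf.
have cov : forall x, [set: X] x -> \forall x' \near x & i \near (+oo : set_system R),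
     cabs (f x') < i.
  move=> x _.
  have h1 := cf x 1 ltr01.
  exists ([set x' | cabs (f x' - f x) < 1], [set M | cabs (f x) + 1 < M]).
    split => //=; exists (cabs (f x) + 1); split; first by rewrite num_real.
    by move=> M.
  move=> [x' M] /= [h2 h3].
  apply: le_lt_trans (cabsB (f x') (f x)) _.
  apply: lt_trans h3; rewrite addrC ltrD2l //.
have := (proj1 (compact_near_coveringP [set: X]) Xcpt) R (+oo : set_system R)
  (fun M x => cabs (f x) < M) _ cov.
move=> [M [_ hM]]. exists (M + 1) => x; apply: ltW; apply: hM; last by [].
by rewrite ltrDl.
Qed.

End F.

Section G.
Variable R : realType.
Local Notation C := (R[i]).
Local Notation Re := (@complex.Re R).
Local Notation Im := (@complex.Im R).
Variable X : topologicalType.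
Hypothesis Xcpt : compact [set: X].
Variable phi : X -> X.
Variable y : X.

Definition orb k := iter k phi y.
Definition obnd (f : X -> C) := exists M : R, forall k, cabs (f (orb k)) <= M.

Lemma ccont_obnd (f : X -> C) : ccont f -> obnd f.
Proof. by move=> /(ccont_bounded Xcpt) [M hM]; exists M. Qed.

Lemma obnd_ge0 (f : X -> C) (M : R) : (forall k, cabs (f (orb k)) <= M) -> 0 <= M.
Proof. move=> h; exact: le_trans (cabs_ge0 _) (h 0%N). Qed.

Lemma sq_piyf_le (f : X -> C) (M : R) (xi : nat -> C) : (forall k, cabs (f (orb k)) <= M) ->
  forall k, sq (piyf phi y f xi) k <= (M ^+ 2 *: sq xi) k.
Proof.
move=> hM k; rewrite /sq /piyf /= cabs2M.
apply: ler_wpM2r; first exact: cabs2_ge0.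
rewrite cabs2_cabs; apply: lerXn2r; rewrite ?nnegrE ?cabs_ge0 //.
- exact: obnd_ge0 hM.
- exact: hM.
Qed.

Lemma l2N_piyf (f : X -> C) (xi : nat -> C) : obnd f -> l2N xi -> l2N (piyf phi y f xi).
Proof.
move=> [M hM] hx; rewrite l2N_summ.
apply: (proj1 (ss_le (@sq_ge0 _ _) (sq_piyf_le xi hM) _)).
exact: is_cvg_seriesZ.
Qed.

Lemma S_piyf_le (f : X -> C) (M : R) (xi : nat -> C) : (forall k, cabs (f (orb k)) <= M) -> l2N xi ->
  S (sq (piyf phi y f xi)) <= M ^+ 2 * S (sq xi).
Proof.
move=> hM hx.
have := proj2 (ss_le (@sq_ge0 _ _) (sq_piyf_le xi hM) (is_cvg_seriesZ (k:=M ^+ 2) hx)).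
by rewrite /S lim_seriesZ.
Qed.

Definition rhoy (f : X -> C) (u : l2 R) : l2 R :=
  match pselect (obnd f) with
  | left h => @L2 R (piyf phi y f u) (introT (asboolP _) (l2N_piyf h (l2_l2N u)))
  | right _ => 0
  end.

Lemma rhoyE (f : X -> C) (u : l2 R) : obnd f -> (rhoy f u : nat -> C) = piyf phi y f u.
Proof. by move=> h; rewrite /rhoy; case: pselect. Qed.

Lemma l2N_piyU (xi : nat -> C) : l2N xi -> l2N (piyU xi).
Proof.
move=> hx; rewrite l2N_summ.
apply: (proj1 (ss_bound (M:=S (sq xi)) _ _)) => [k|n]; first exact: sq_ge0.
case: n => [|n]; first by rewrite /series /= big_geq // ss_ge0 //; exact: sq_ge0.
rewrite /series /= big_nat_recl //= /sq /= cabs2_0 add0r.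
apply: le_trans (ss_partial (@sq_ge0 _ _) hx n).
by [].
Qed.

Definition Vy (u : l2 R) : l2 R :=
  @L2 R (piyU u) (introT (asboolP _) (l2N_piyU (l2_l2N u))).

Lemma VyE (u : l2 R) : (Vy u : nat -> C) = piyU u. Proof. by []. Qed.

Lemma S_shiftU (f : nat -> R) : summ f ->
  summ (fun k => if k is k'.+1 then f k' else 0) /\
  S (fun k => if k is k'.+1 then f k' else 0) = S f.
Proof.
move=> hf.
have e : forall n, series (fun k => if k is k'.+1 then f k' else 0) n.+1 = series f n.
  by move=> n; rewrite /series /= big_nat_recl //= add0r.
have cv : series (fun k => if k is k'.+1 then f k' else 0) @ \oo --> S f.
  rewrite -cvg_shiftS /=; under eq_fun do rewrite e; exact: hf.
split; first by apply/cvg_ex; eexists; exact: cv.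
exact: cvg_lim cv.
Qed.

End G.

Section H.
Variable R : realType.
Local Notation C := (R[i]).
Local Notation Re := (@complex.Re R).
Local Notation Im := (@complex.Im R).
Variable X : topologicalType.
Hypothesis Xcpt : compact [set: X].
Variable phi : X -> X.
Variable y : X.

Definition Hl2 : hilbert R :=
  Hilbert (@hip_linear R) (@hip_sym R) (@hip_ge0 R) (@hip_def R) (@l2_complete R).

Lemma hn2_l2 (u : hcar Hl2) : hn2 u = S (sq (u : l2 R)).
Proof. by rewrite /hn2; change (Re (hip u u) = S (sq (u : l2 R))); rewrite hip_self. Qed.

Lemma obndD (f g : X -> C) : obnd phi y f -> obnd phi y g -> obnd phi y (fun x => f x + g x).
Proof.
move=> [M hM] [N hN]; exists (M + N) => k.
apply: le_trans (cabsD _ _) _; exact: lerD.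
Qed.

Lemma obndM (f g : X -> C) : obnd phi y f -> obnd phi y g -> obnd phi y (fun x => f x * g x).
Proof.
move=> [M hM] [N hN]; exists (M * N) => k.
rewrite cabsM; apply: ler_pM => //; exact: cabs_ge0.
Qed.

Lemma obndZ (a : C) (f : X -> C) : obnd phi y f -> obnd phi y (fun x => a * f x).
Proof.
move=> [M hM]; exists (cabs a * M) => k.
rewrite cabsM; apply: ler_wpM2l => //; exact: cabs_ge0.
Qed.

Lemma obndJ (f : X -> C) : obnd phi y f -> obnd phi y (fun x => (f x)^*%C).
Proof. by move=> [M hM]; exists M => k; rewrite cabs_conj. Qed.

Lemma obnd_phi (f : X -> C) : obnd phi y f -> obnd phi y (fun x => f (phi x)).
Proof. by move=> [M hM]; exists M => k; have := hM k.+1; rewrite /orb iterS. Qed.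

Local Notation rho := (rhoy phi y).
Local Notation V := (Vy (R:=R)).

Lemma l2ext (u v : l2 R) : (forall k, u k = v k) -> u = v.
Proof. by move=> h; apply: val_inj; apply: funext. Qed.

Lemma cov_rep_y : @cov_rep R X phi Hl2 rho V.
Proof.
have cb := ccont_obnd Xcpt phi y.
split.
  move=> f /cb hf; split.
    move=> a u v; apply: l2ext => k.
    rewrite /= !rhoyE // /piyf /=.
    change (f (iter k phi y) * (a * u k + v k) = a * (f (iter k phi y) * u k) + f (iter k phi y) * v k).
    by rewrite mulrDr mulrCA.
  have [M hM] := hf; exists (M ^+ 2) => u.
  rewrite !hn2_l2 rhoyE //; exact: S_piyf_le hM (l2_l2N u).
split.
  move=> f g /cb hf /cb hg u; apply: l2ext => k.
  rewrite /= !rhoyE //; last exact: obndD.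
  by rewrite /piyf mulrDl.
split.
  move=> a f /cb hf u; apply: l2ext => k.
  rewrite /= !rhoyE //; last exact: obndZ.
  by rewrite /piyf -mulrA.
split.
  move=> f g /cb hf /cb hg u; apply: l2ext => k.
  rewrite /= !rhoyE //; last exact: obndM.
  by rewrite /piyf mulrA.
split.
  move=> f /cb hf u v.
  rewrite /= /hip /= !rhoyE //; last exact: obndJ.
  have e : forall k, (piyf phi y f u) k * ((v k)^*)%C = u k * ((piyf phi y (fun x => (f x)^*%C) v) k)^*%C.
    move=> k; rewrite /piyf.
    case: (f (iter k phi y)) => a b; case: (u k) => c d; case: (v k) => p q.
    by apply/eqP; rewrite eq_complex /=; apply/andP; split; apply/eqP; ring.
  by congr Complex; congr S; apply: funext => k; rewrite /ipre /ipim e.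
split.
  split.
    move=> a u v; apply: l2ext => k; rewrite /= /piyU.
    case: k => [|k]; last by [].
    by change ((0:C) = a * 0 + 0); rewrite mulr0 addr0.
  move=> u v; rewrite /hip /=; congr Complex.
  - have -> : ipre (piyU u) (piyU v) = (fun k => if k is k'.+1 then ipre u v k' else 0).
      apply: funext => k; rewrite /ipre /piyU; case: k => [|k] //.
      by change (Re (0 * (0 : C)^*%C) = 0); rewrite mul0r.
    exact: (proj2 (S_shiftU (summ_ipre (l2_l2N u) (l2_l2N v)))).
  - have -> : ipim (piyU u) (piyU v) = (fun k => if k is k'.+1 then ipim u v k' else 0).
      apply: funext => k; rewrite /ipim /piyU; case: k => [|k] //.
      by change (Im (0 * (0 : C)^*%C) = 0); rewrite mul0r.
    exact: (proj2 (S_shiftU (summ_ipim (l2_l2N u) (l2_l2N v)))).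
move=> f /cb hf u; apply: l2ext => k.
rewrite /= rhoyE // rhoyE; last exact: obnd_phi.
rewrite /piyf /piyU; case: k => [|k]; first by rewrite mulr0.
by [].
Qed.

End H.

Section I.
Variable R : realType.
Local Notation C := (R[i]).
Variable X : topologicalType.
Hypothesis Xcpt : compact [set: X].
Variable phi : X -> X.

Lemma sum_l2 n (F : 'I_n -> l2 R) k : (\sum_i F i : l2 R) k = \sum_i (F i : nat -> C) k.
Proof.
apply: (big_rec2 (fun (a : l2 R) (b : C) => a k = b)) => // i a b _ h.
by rewrite -h.
Qed.

Lemma iter_Vy n (w : l2 R) : (iter n (@Vy R) w : nat -> C) = iter n (@piyU R) (w : nat -> C).
Proof. by elim: n => //= n ->. Qed.

Lemma rep_applyE (y : X) (G : seq (X -> C)) (u : l2 R) : A0_elt G ->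
  (rep_apply (H:=Hl2 R) (rhoy phi y) (@Vy R) G u : nat -> C) = pi_y phi y G u.
Proof.
move=> hG; apply: funext => k; rewrite /rep_apply /pi_y sum_l2.
apply: eq_bigr => i _; rewrite iter_Vy rhoyE //.
exact: (ccont_obnd Xcpt phi y (hG i)).
Qed.

Lemma piy_cauchy (Fs : nat -> seq (X -> C)) : (forall k, A0_elt (Fs k)) ->
  univ_cauchy phi Fs ->
  forall e : R, 0 < e -> exists N, forall m n, (N <= m)%N -> (N <= n)%N ->
  forall (y : X) (xi : nat -> C), l2N xi ->
  S (sq (fun k => pi_y phi y (Fs m) xi k - pi_y phi y (Fs n) xi k)) <= e ^+ 2 * S (sq xi).
Proof.
move=> hA hc e e0; have [N hN] := hc e e0; exists N => m n hm hn y xi hxi.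
have xiP : xi \in (@l2p R) by apply/asboolP.
have := hN m n hm hn (Hl2 R) (rhoy phi y) (@Vy R) (@cov_rep_y R X Xcpt phi y) (L2 xiP).
rewrite !hn2_l2.
have -> : (rep_apply (H:=Hl2 R) (rhoy phi y) (@Vy R) (Fs m) (L2 xiP) -
      rep_apply (H:=Hl2 R) (rhoy phi y) (@Vy R) (Fs n) (L2 xiP) : l2 R) =
     (fun k => pi_y phi y (Fs m) xi k - pi_y phi y (Fs n) xi k) :> (nat -> C).
  apply: funext => k.
  rewrite l2vD l2vN !rep_applyE //.
by [].
Qed.

End I.

Section J.
Variable R : realType.
Local Notation C := (R[i]).
Local Notation Re := (@complex.Re R).
Local Notation Im := (@complex.Im R).

Lemma normNE (xi : nat -> C) : normN xi = Num.sqrt (S (sq xi)). Proof. by []. Qed.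

Lemma normN_ge0 (xi : nat -> C) : 0 <= normN xi.
Proof. exact: sqrtr_ge0. Qed.

Lemma sqr_normN (xi : nat -> C) : l2N xi -> normN xi ^+ 2 = S (sq xi).
Proof. by move=> h; rewrite normNE sqr_sqrtr // ss_ge0 //; exact: sq_ge0. Qed.

Lemma normN_le (xi : nat -> C) (c : R) : l2N xi -> 0 <= c ->
  (normN xi <= c) = (S (sq xi) <= c ^+ 2).
Proof.
move=> h c0; rewrite normNE -{1}(ger0_norm c0) -sqrtr_sqr ler_sqrt // sqr_ge0 //.
Qed.

Lemma cabs2_tri (t : R) (z w : C) : 0 < t ->
  cabs2 (z + w) <= (1 + t) * cabs2 z + (1 + t^-1) * cabs2 w.
Proof.
move=> t0; case: z => a b; case: w => c d; rewrite !cabs2E /=.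
rewrite -subr_ge0.
have -> : (1 + t) * (a ^+ 2 + b ^+ 2) + (1 + t^-1) * (c ^+ 2 + d ^+ 2) -
    ((a + c) ^+ 2 + (b + d) ^+ 2) = t^-1 * ((t * a - c) ^+ 2 + (t * b - d) ^+ 2).
  by field; rewrite gt_eqF.
by apply: mulr_ge0; [rewrite invr_ge0 ltW | rewrite addr_ge0 // sqr_ge0].
Qed.

Lemma l2N_eq0 (a : nat -> C) : l2N a -> S (sq a) = 0 -> forall k, a k = 0.
Proof. by move=> h h0 k; apply: cabs2_eq0; apply: (ss_eq0 (@sq_ge0 _ a) h h0). Qed.

Lemma l2N_addf (a b : nat -> C) : l2N a -> l2N b -> l2N (fun k => a k + b k).
Proof. exact: l2N_add. Qed.

Lemma normN_tri (a b : nat -> C) : l2N a -> l2N b ->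
  normN (fun k => a k + b k) <= normN a + normN b.
Proof.
move=> ha hb.
have hab := l2N_addf ha hb.
have [A0|A0] := eqVneq (S (sq a)) 0.
  have e : (fun k => a k + b k) = b by apply: funext => k; rewrite (l2N_eq0 ha A0) add0r.
  by rewrite e [normN a]normNE A0 sqrtr0 add0r.
have [B0|B0] := eqVneq (S (sq b)) 0.
  have e : (fun k => a k + b k) = a by apply: funext => k; rewrite (l2N_eq0 hb B0) addr0.
  by rewrite e [normN b]normNE B0 sqrtr0 addr0.
have Ag : 0 < S (sq a) by rewrite lt_def A0 ss_ge0 //; exact: sq_ge0.
have Bg : 0 < S (sq b) by rewrite lt_def B0 ss_ge0 //; exact: sq_ge0.
set al := normN a; set be := normN b.
have alg : 0 < al by rewrite /al normNE sqrtr_gt0.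
have beg : 0 < be by rewrite /be normNE sqrtr_gt0.
set t := be / al.
have t0 : 0 < t by rewrite divr_gt0.
rewrite normN_le //; last by rewrite addr_ge0 // ltW.
have h1 := ss_le (@sq_ge0 _ _) (fun k => cabs2_tri (a k) (b k) t0)
   (is_cvg_seriesD (is_cvg_seriesZ (k:=1+t) ha) (is_cvg_seriesZ (k:=1+t^-1) hb)).
apply: le_trans (proj2 h1) _.
rewrite (_ : (fun k => (1 + t) * cabs2 (a k) + (1 + t^-1) * cabs2 (b k)) =
   (1 + t) *: sq a + (1 + t^-1) *: sq b); last by apply: funext.
rewrite /S lim_seriesD; try exact: is_cvg_seriesZ.
rewrite !lim_seriesZ //.
rewrite -/(S (sq a)) -/(S (sq b)) -(sqr_normN ha) -(sqr_normN hb) -/al -/be /t.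
rewrite le_eqVlt; apply/orP; left; apply/eqP.
rewrite /GRing.scale /=; field.
by rewrite !gt_eqF.
Qed.

Lemma sup_ub_gen (T : Type) (P : set T) (f : T -> R) (K : R) :
  (forall x, P x -> f x <= K) -> forall x, P x -> f x <= sup [set f x | x in P].
Proof.
move=> hK x Px; apply: sup_upper_bound; last by exists x.
split; first by exists (f x), x.
by exists K => _ [z Pz <-]; exact: hK.
Qed.

Lemma sup_le_gen (T : Type) (P : set T) (f : T -> R) (M : R) :
  (exists x, P x) -> (forall x, P x -> f x <= M) -> sup [set f x | x in P] <= M.
Proof.
move=> [x Px] hM; apply: ge_sup; first by exists (f x), x.
by move=> _ [z Pz <-]; exact: hM.
Qed.

End J.

Section K.
Variable R : realType.
Local Notation C := (R[i]).
Variable X : topologicalType.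
Hypothesis Xcpt : compact [set: X].
Variable phi : X -> X.

Lemma normN0 : normN (0 : nat -> C) = 0.
Proof. by rewrite normNE (_ : sq 0 = 0) ?S0 ?sqrtr0 //; apply: funext => k; exact: cabs2_0. Qed.

Lemma sq_piyU (xi : nat -> C) : sq (piyU xi) = (fun k => if k is k'.+1 then sq xi k' else 0).
Proof. by apply: funext => -[|k] //=; rewrite /sq /= cabs2_0. Qed.

Lemma normN_piyU (xi : nat -> C) : l2N xi -> normN (piyU xi) = normN xi.
Proof. by move=> h; rewrite !normNE sq_piyU (proj2 (S_shiftU h)). Qed.

Lemma normN_iterU n (xi : nat -> C) : l2N xi ->
  l2N (iter n (@piyU R) xi) /\ normN (iter n (@piyU R) xi) = normN xi.
Proof.
move=> h; elim: n => [|n [IH1 IH2]] //=.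
split; first exact: l2N_piyU.
by rewrite normN_piyU.
Qed.

Lemma normN_piyf_le (y : X) (f : X -> C) (M : R) (xi : nat -> C) :
  (forall k, cabs (f (orb phi y k)) <= M) -> 0 <= M -> l2N xi ->
  normN (piyf phi y f xi) <= M * normN xi.
Proof.
move=> hM M0 hx.
rewrite normN_le //; last by rewrite mulr_ge0 // normN_ge0.
  by rewrite exprMn sqr_normN //; exact: S_piyf_le.
apply: l2N_piyf => //; by exists M.
Qed.

Lemma normN_finsum (g : nat -> nat -> C) (c : nat -> R) :
  (forall n, l2N (g n)) -> (forall n, normN (g n) <= c n) -> forall L,
  l2N (fun k => \sum_(0 <= n < L) g n k) /\ normN (fun k => \sum_(0 <= n < L) g n k) <= \sum_(0 <= n < L) c n.
Proof.
move=> hl hc; elim=> [|L [IH1 IH2]].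
  have -> : (fun k => \sum_(0 <= n < 0) g n k) = 0 by apply: funext => k; rewrite big_geq.
  by rewrite big_geq // normN0; split => //; exact: l2N_0.
have -> : (fun k => \sum_(0 <= n < L.+1) g n k) = (fun k => \sum_(0 <= n < L) g n k + g L k).
  by apply: funext => k; rewrite big_nat_recr.
split; first exact: l2N_addf.
rewrite big_nat_recr //=; apply: le_trans (normN_tri IH1 (hl L)) _.
exact: lerD.
Qed.

Lemma pi_yE (y : X) (G : seq (X -> C)) (xi : nat -> C) :
  pi_y phi y G xi = fun k => \sum_(0 <= n < size G) iter n (@piyU R) (piyf phi y (nth (fun=> 0) G n) xi) k.
Proof. by apply: funext => k; rewrite /pi_y big_mkord. Qed.

Lemma piy_bound (G : seq (X -> C)) : A0_elt G -> exists K : R, 0 <= K /\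
  forall (y : X) (xi : nat -> C), l2N xi ->
  l2N (pi_y phi y G xi) /\ normN (pi_y phi y G xi) <= K * normN xi.
Proof.
move=> hG.
have hb : forall n, exists M : R, 0 <= M /\ forall x, cabs (nth (fun=> 0) G n x) <= M.
  move=> n; have [M hM] := ccont_bounded Xcpt (hG n).
  exists `|M|; split => // x; apply: le_trans (hM x) _; exact: ler_norm.
pose M n := proj1_sig (cid (hb n)).
have hM : forall n, 0 <= M n /\ forall x, cabs (nth (fun=> 0) G n x) <= M n.
  by move=> n; rewrite /M; case: cid.
exists (\sum_(0 <= n < size G) M n); split.
  by apply: sumr_ge0 => n _; exact: (proj1 (hM n)).
move=> y xi hx; rewrite pi_yE mulr_suml.
have ob : forall n, obnd phi y (nth (fun=>0) G n).
  by move=> n; exists (M n) => k; exact: (proj2 (hM n)).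
apply: normN_finsum => n.
- by case: (normN_iterU n (l2N_piyf (ob n) hx)).
- rewrite (proj2 (normN_iterU n (l2N_piyf (ob n) hx))).
  apply: normN_piyf_le => //; [move=> k; exact: (proj2 (hM n)) | exact: (proj1 (hM n))].
Qed.

Definition PN := [set xi : nat -> C | l2N xi /\ normN xi <= 1].

Lemma PN0 : PN 0.
Proof. by split; [exact: l2N_0 | rewrite normN0]. Qed.

Lemma opN_ub (T : (nat -> C) -> (nat -> C)) (K : R) :
  (forall xi, l2N xi -> normN (T xi) <= K * normN xi) -> 0 <= K ->
  forall xi, PN xi -> normN (T xi) <= opnormN T.
Proof.
move=> hT K0; apply: (sup_ub_gen (K:=K)) => xi [h1 h2].
apply: le_trans (hT _ h1) _; rewrite -[leRHS]mulr1; exact: ler_wpM2l.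
Qed.

Lemma opN_le (T : (nat -> C) -> (nat -> C)) (M : R) :
  (forall xi, PN xi -> normN (T xi) <= M) -> opnormN T <= M.
Proof. move=> h; apply: sup_le_gen => //; exists 0; exact: PN0. Qed.

Lemma opN_ge0 (T : (nat -> C) -> (nat -> C)) (K : R) :
  (forall xi, l2N xi -> normN (T xi) <= K * normN xi) -> 0 <= K ->
  0 <= opnormN T.
Proof. move=> hT K0; apply: le_trans (opN_ub hT K0 PN0); exact: normN_ge0. Qed.

Lemma a_cauchy (Fs : nat -> seq (X -> C)) : (forall k, A0_elt (Fs k)) ->
  univ_cauchy phi Fs ->
  forall e : R, 0 < e -> exists N, forall m n, (N <= m)%N -> (N <= n)%N ->
  forall y : X, opnormN (pi_y phi y (Fs m)) <= opnormN (pi_y phi y (Fs n)) + e.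
Proof.
move=> hA hc e e0; have [N hN] := piy_cauchy Xcpt hA hc e0.
exists N => m n hm hn y.
have [Km [Km0 hKm]] := piy_bound (hA m).
have [Kn [Kn0 hKn]] := piy_bound (hA n).
apply: opN_le => xi [h1 h2].
set a := pi_y phi y (Fs m) xi; set b := pi_y phi y (Fs n) xi.
have la : l2N a by case: (hKm y xi h1).
have lb : l2N b by case: (hKn y xi h1).
set d := fun k => a k - b k.
have ld : l2N d.
  have := l2N_add la (l2N_scale (a:=-1) lb).
  rewrite (_ : _ + _ = d) //; apply: funext => k; rewrite /d.
  by transitivity (a k + (-1) * b k); [by [] | rewrite mulN1r].
have hd : normN d <= e.
  have : normN d <= e * normN xi.
    rewrite normN_le //; last by rewrite mulr_ge0 ?normN_ge0 // ltW.
    by rewrite exprMn sqr_normN //; exact: hN.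
  move/le_trans; apply; rewrite -[leRHS]mulr1; apply: ler_wpM2l => //; exact: ltW.
have -> : a = fun k => b k + d k by apply: funext => k; rewrite /d addrC subrK.
apply: le_trans (normN_tri lb ld) _.
apply: lerD => //.
apply: (opN_ub (fun xi h => proj2 (hKn y xi h)) Kn0); by split.
Qed.

End K.

Section L.
Variable R : realType.
Local Notation C := (R[i]).
Variable X : topologicalType.
Variables phi psi : X -> X.
Hypothesis phiK : cancel phi psi.
Hypothesis psiK : cancel psi phi.

Lemma zitS (x : X) (n : int) : phi (zit phi psi n x) = zit phi psi (n + 1) x.
Proof.
case: n => [k|k].
  by rewrite (_ : Posz k + 1 = Posz k.+1) //=; lia.
case: k => [|k]; first by rewrite /= psiK.
rewrite (_ : Negz k.+1 + 1 = Negz k); last by lia.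
by rewrite /= psiK.
Qed.

Lemma zit_iter (x : X) (k : nat) (n : int) : iter k phi (zit phi psi n x) = zit phi psi (n + k%:Z) x.
Proof.
elim: k => [|k IH]; first by rewrite addr0.
by rewrite iterS IH zitS; congr zit; lia.
Qed.

Definition Eemb (n : int) (xi : nat -> C) : int -> C :=
  fun m => if n <= m then xi (absz (m - n)%R) else 0.

Lemma iter_PiU j (g : int -> C) m : iter j (@PiU R) g m = g (m - j%:Z).
Proof.
elim: j m => [|j IH] m; first by rewrite subr0.
rewrite iterS /PiU IH; congr g; lia.
Qed.

Lemma iter_piyU j (g : nat -> C) k : iter j (@piyU R) g k = if (j <= k)%N then g (k - j)%N else 0.
Proof.
elim: j k => [|j IH] k; first by rewrite subn0.
by rewrite iterS /piyU; case: k => [|k] //; rewrite IH subSS.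
Qed.

Lemma PiE (x : X) (G : seq (X -> C)) (xi : nat -> C) (n : int) :
  Pi_x phi psi x G (Eemb n xi) = Eemb n (pi_y phi (zit phi psi n x) G xi).
Proof.
apply: funext => m; rewrite /Pi_x /pi_y /Eemb.
case: ifPn => nm.
  set d := absz (m - n)%R.
  have md : m = n + d%:Z by rewrite /d; lia.
  apply: eq_bigr => j _; rewrite iter_PiU iter_piyU /Pif /piyf.
  have -> : (n <= m - j%:Z) = (j <= d)%N by rewrite md; lia.
  case: ifPn => jd; last by rewrite mulr0.
  rewrite zit_iter; congr (_ * _); last by congr xi; rewrite md; lia.
  by congr (nth _ G j); congr zit; rewrite md; lia.
apply: big1 => j _; rewrite iter_PiU /Pif.
have -> : (n <= m - j%:Z) = false by apply/negbTE; move: nm; lia.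
by rewrite mulr0.
Qed.

End L.

Section M.
Variable R : realType.
Local Notation C := (R[i]).

Lemma ss_shift_rev (a : nat -> R) m : (forall k, 0 <= a k) -> summ (fun k => a (k + m)%N) -> summ a.
Proof.
move=> a0 sm.
have h : (fun n => series a m + series (fun k => a (k + m)%N) n) @ \oo -->
   series a m + S (fun k => a (k + m)%N).
  apply: cvgD; first exact: cvg_cst.
  exact: sm.
have h2 : series a @ \oo --> series a m + S (fun k => a (k + m)%N).
  rewrite -(cvg_shiftn m); apply: cvg_trans h; apply: near_eq_cvg; apply: nearW => n /=.
  by rewrite seriesD_shift.
by apply/cvg_ex; eexists; exact: h2.
Qed.

Definition Zp (z : int -> C) := fun k : nat => z (Posz k).
Definition Zn (z : int -> C) := fun k : nat => z (Negz k).

Lemma l2ZE (z : int -> C) : l2Z z = (summ (sq (Zp z)) /\ summ (sq (Zn z))). Proof. by []. Qed.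
Lemma normZE (z : int -> C) : normZ z = Num.sqrt (S (sq (Zp z)) + S (sq (Zn z))). Proof. by []. Qed.

Lemma series0 (a : nat -> R) n : (forall k, a k = 0) -> series a n = 0.
Proof. by move=> h; rewrite /series /= big1. Qed.

Lemma S0' (a : nat -> R) : (forall k, a k = 0) -> summ a /\ S a = 0.
Proof.
move=> h; have -> : a = 0 by apply: funext => k; rewrite h.
split; last exact: S0.
rewrite /summ (_ : series 0 = fun _ => 0); first exact: is_cvg_cst.
by apply: funext => n; rewrite series0.
Qed.

Lemma EN (n : int) (xi : nat -> C) :
  (l2N xi <-> l2Z (Eemb n xi)) /\
  (l2N xi -> S (sq (Zp (Eemb n xi))) + S (sq (Zn (Eemb n xi))) = S (sq xi)).
Proof.
case: n => [p|q].
- have hn : forall k, sq (Zn (Eemb (Posz p) xi)) k = 0.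
    by move=> k; rewrite /sq /Zn /Eemb /= cabs2_0.
  have [sn Sn] := S0' hn.
  set b := sq (Zp (Eemb (Posz p) xi)).
  have b0 : forall k, 0 <= b k by move=> k; exact: sq_ge0.
  have bs : (fun k => b (k + p)%N) = sq xi.
    apply: funext => k; rewrite /b /sq /Zp /Eemb /= ifT; last by lia.
    by congr (cabs2 (xi _)); lia.
  have bp : series b p = 0.
    rewrite /series /= big_nat_cond big1 // => k /andP[/andP[_ kp] _].
    by rewrite /b /sq /Zp /Eemb /= ifF ?cabs2_0 //; lia.
  split.
    rewrite l2ZE l2N_summ; split.
      by move=> h; split => //; apply: (ss_shift_rev (m:=p)) => //; rewrite bs.
    by move=> [h _]; rewrite -bs; exact: (proj1 (ss_shift p b0 h)).
  move=> h; rewrite Sn addr0.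
  have sb : summ b by apply: (ss_shift_rev (m:=p)) => //; rewrite bs.
  by rewrite (proj2 (ss_shift p b0 sb)) bs bp add0r.
- set c := sq (Zn (Eemb (Negz q) xi)).
  have c0 : forall k, 0 <= c k by move=> k; exact: sq_ge0.
  have cs : forall k, (fun k => c (k + q.+1)%N) k = 0.
    move=> k; rewrite /c /sq /Zn /Eemb /= ifF ?cabs2_0 //; lia.
  have sc : summ c by apply: (ss_shift_rev (m:=q.+1)) => //; exact: (proj1 (S0' cs)).
  have Sc : S c = series (sq xi) q.+1.
    rewrite (proj2 (ss_shift q.+1 c0 sc)) (proj2 (S0' cs)) addr0.
    rewrite /series /= [RHS]big_nat_rev /= add0n.
    apply: eq_big_nat => k /andP[_ kq]; rewrite /c /sq /Zn /Eemb /= ifT; last by lia.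
    by congr (cabs2 (xi _)); lia.
  have ps : sq (Zp (Eemb (Negz q) xi)) = (fun k => sq xi (k + q.+1)%N).
    by apply: funext => k.
  have a0 : forall k, 0 <= sq xi k by move=> k; exact: sq_ge0.
  split.
    rewrite l2ZE l2N_summ ps; split.
      by move=> h; split => //; exact: (proj1 (ss_shift q.+1 a0 h)).
    by move=> [h _]; exact: (ss_shift_rev a0 h).
  move=> h; rewrite Sc ps (proj2 (ss_shift q.+1 a0 h)) addrC //.
Qed.

Lemma normZ_E (n : int) (xi : nat -> C) : l2N xi -> normZ (Eemb n xi) = normN xi.
Proof. by move=> h; rewrite normZE (proj2 (EN n xi) h). Qed.

Lemma normZ_window (z : int -> C) (s : R) : 0 <= s ->
  (forall K, series (sq (Zp z)) K + series (sq (Zn z)) K <= s ^+ 2) ->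
  l2Z z /\ normZ z <= s.
Proof.
move=> s0 hK.
have p0 : forall k, 0 <= sq (Zp z) k by move=> k; exact: sq_ge0.
have n0 : forall k, 0 <= sq (Zn z) k by move=> k; exact: sq_ge0.
have sp : summ (sq (Zp z)).
  apply: (proj1 (ss_bound (M:=s ^+ 2) p0 _)) => K; apply: le_trans (hK K).
  rewrite lerDl /series /=; apply: sumr_ge0 => k _; exact: n0.
have sn : summ (sq (Zn z)).
  apply: (proj1 (ss_bound (M:=s ^+ 2) n0 _)) => K; apply: le_trans (hK K).
  rewrite lerDr /series /=; apply: sumr_ge0 => k _; exact: p0.
split => //.
rewrite normZE -(ger0_norm s0) -sqrtr_sqr ler_sqrt ?sqr_ge0 //.
have cv : (fun K => series (sq (Zp z)) K + series (sq (Zn z)) K) @ \oo -->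
   S (sq (Zp z)) + S (sq (Zn z)) by apply: cvgD; [exact: sp | exact: sn].
rewrite -(cvg_lim _ cv) //; apply: limr_le; first by apply/cvg_ex; eexists; exact: cv.
by apply: nearW.
Qed.

Lemma trunc_E (n0 : int) (eta : int -> C) :
  Eemb n0 (fun j => eta (n0 + j%:Z)) = fun m => if n0 <= m then eta m else 0.
Proof.
apply: funext => m; rewrite /Eemb; case: ifPn => // h.
by congr eta; lia.
Qed.

Lemma trunc_le (n0 : int) (eta : int -> C) : l2Z eta ->
  l2Z (fun m => if n0 <= m then eta m else 0) /\
  normZ (fun m => if n0 <= m then eta m else 0) <= normZ eta.
Proof.
rewrite !l2ZE => -[hp hn].
have le1 : forall (a : nat -> int) k, sq (fun k => if n0 <= a k then eta (a k) else 0) k <= sq (fun k => eta (a k)) k.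
  move=> a k; rewrite /sq; case: ifPn => _ //; rewrite cabs2_0; exact: cabs2_ge0.
have [sp Sp] := ss_le (@sq_ge0 _ _) (le1 Posz) hp.
have [sn Sn] := ss_le (@sq_ge0 _ _) (le1 (fun k => Negz k)) hn.
split; first by split.
rewrite !normZE ler_sqrt; last by apply: addr_ge0; apply: ss_ge0 => //; exact: sq_ge0.
exact: lerD.
Qed.

End M.

Section N.
Variable R : realType.
Local Notation C := (R[i]).
Variable X : topologicalType.
Hypothesis Xcpt : compact [set: X].
Variables phi psi : X -> X.
Hypothesis phiK : cancel phi psi.
Hypothesis psiK : cancel psi phi.
Variable x : X.

Local Notation zitx n := (zit phi psi n x).
Local Notation Pi G := (Pi_x phi psi x G).

Lemma A2 (G : seq (X -> C)) (hG : A0_elt G) (M : R)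
  (hM : forall n : int, opnormN (pi_y phi (zitx n) G) <= M)
  (eta : int -> C) : l2Z eta -> normZ eta <= 1 -> normZ (Pi G eta) <= M.
Proof.
move=> h1 h2.
have [K [K0 hK]] := piy_bound Xcpt phi hG.
have M0 : 0 <= M.
  apply: le_trans (hM 0); apply: (@opN_ge0 _ _ K) => // xi h; exact: (proj2 (hK _ xi h)).
apply: (proj2 (normZ_window M0 _)) => Kw.
pose L := size G; pose q := (Kw + L)%N; pose n0 := Negz q.
pose xi := fun j : nat => eta (n0 + j%:Z).
have hE : Eemb n0 xi = fun m => if n0 <= m then eta m else 0 by exact: trunc_E.
have [lt nt] := trunc_le n0 h1.
have lxi : l2N xi by apply/(proj1 (EN n0 xi)); rewrite hE.
have nxi : normN xi <= 1 by rewrite -(normZ_E n0 lxi) hE; exact: le_trans nt h2.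
have PiEq : forall m, n0 + L%:Z <= m -> Pi G eta m = Pi G (Eemb n0 xi) m.
  move=> m hm; rewrite /Pi_x; apply: eq_bigr => j _; rewrite !iter_PiU /Pif hE /= ifT //.
  have := ltn_ord j; rewrite /L in hm; lia.
have [lpi npi] := hK (zitx n0) xi lxi.
have hz : Pi G (Eemb n0 xi) = Eemb n0 (pi_y phi (zitx n0) G xi) by exact: PiE.
have [lz Sz] := EN n0 (pi_y phi (zitx n0) G xi).
have lz' := proj1 lz lpi.
rewrite -hz l2ZE in lz'.
case: lz' => lzp lzn.
have e1 : series (sq (Zp (Pi G eta))) Kw = series (sq (Zp (Pi G (Eemb n0 xi)))) Kw.
  apply: eq_big_nat => k /andP[_ kK]; rewrite /sq /Zp PiEq //; rewrite /n0 /q /L; lia.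
have e2 : series (sq (Zn (Pi G eta))) Kw = series (sq (Zn (Pi G (Eemb n0 xi)))) Kw.
  apply: eq_big_nat => k /andP[_ kK]; rewrite /sq /Zn PiEq //; rewrite /n0 /q /L; lia.
rewrite e1 e2.
apply: le_trans (lerD (ss_partial (@sq_ge0 _ _) lzp Kw) (ss_partial (@sq_ge0 _ _) lzn Kw)) _.
rewrite hz (Sz lpi) -normN_le //.
apply: le_trans (hM n0).
apply: (opN_ub (K:=K)) => //; try (by move=> xi' h; exact: (proj2 (hK _ xi' h))); by split.
Qed.

Lemma A1 (G : seq (X -> C)) (hG : A0_elt G) (n : int) :
  opnormN (pi_y phi (zitx n) G) <= opnormZ (Pi G).
Proof.
have [K [K0 hK]] := piy_bound Xcpt phi hG.
have hMK : forall n : int, opnormN (pi_y phi (zitx n) G) <= K.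
  move=> n'; apply: opN_le => xi [h1 h2].
  apply: le_trans (proj2 (hK _ xi h1)) _; rewrite -[leRHS]mulr1; exact: ler_wpM2l.
apply: opN_le => xi [h1 h2].
have [lpi npi] := hK (zitx n) xi h1.
rewrite -(normZ_E n lpi) -PiE //.
rewrite /opnormZ.
apply: (@sup_ub_gen R (int -> C) [set xi | l2Z xi /\ normZ xi <= 1] (fun e => normZ (Pi G e)) K) => [eta [e1 e2]|]; first exact: A2.
split; first exact: (proj1 (proj1 (EN n xi)) h1).
by rewrite normZ_E.
Qed.

Lemma A2' (G : seq (X -> C)) (hG : A0_elt G) (M : R)
  (hM : forall n : int, opnormN (pi_y phi (zitx n) G) <= M) :
  opnormZ (Pi G) <= M.
Proof.
rewrite /opnormZ.
apply: (@sup_le_gen R (int -> C) [set xi | l2Z xi /\ normZ xi <= 1] (fun e => normZ (Pi G e)) M) => [|eta [e1 e2]]; last exact: A2.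
exists (Eemb 0 0); split; first exact: (proj1 (proj1 (EN 0 0)) (@l2N_0 R)).
by rewrite normZ_E ?normN0 //; exact: l2N_0.
Qed.

End N.

Section O.
Variable R : realType.
Local Notation C := (R[i]).

Lemma cauchy_le (u : nat -> R) :
  (forall e : R, 0 < e -> exists N, forall m n, (N <= m)%N -> (N <= n)%N -> u m <= u n + e) ->
  cvgn u.
Proof.
move=> h; apply: cauchy_R => e e0.
have [N hN] := h (e / 2) (divr_gt0 e0 (ltr0Sn _ 1)).
exists N => m n hm hn.
have h1 := hN m n hm hn; have h2 := hN n m hn hm.
rewrite ltr_norml; apply/andP; split; lra.
Qed.

Lemma lim_close (u : nat -> R) (N : nat) (e : R) :
  (forall m n, (N <= m)%N -> (N <= n)%N -> u m <= u n + e) -> cvgn u ->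
  forall k, (N <= k)%N -> limn u <= u k + e /\ u k <= limn u + e.
Proof.
move=> h cu k hk; split.
  apply: limr_le => //; near=> n; apply: h => //; near: n; exact: nbhs_infty_ge.
rewrite -lerBlDr; apply: limr_ge => //; near=> n.
rewrite lerBlDr; apply: h => //; near: n; exact: nbhs_infty_ge.
Unshelve. all: by end_near.
Qed.

End O.

Unset Implicit Arguments.
Set Strict Implicit.

Theorem lemma6 (R : realType) (X : topologicalType) (phi psi : X -> X)
    (Xcpt : compact [set: X]) (Xhaus : hausdorff_space X)
    (phi_cont : continuous phi) (psi_cont : continuous psi)
    (phiK : cancel phi psi) (psiK : cancel psi phi)
    (Fs : nat -> seq (X -> R[i]))
    (FsA0 : forall k, A0_elt (Fs k))
    (Fs_cauchy : univ_cauchy phi Fs)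
    (x : X) :
  norm_Pi_x phi psi x Fs =
  sup [set norm_pi_y phi y Fs | y in zorbit phi psi x].
Proof.
pose a k y := opnormN (pi_y phi y (Fs k)).
pose b k := opnormZ (Pi_x phi psi x (Fs k)).
have hac := a_cauchy Xcpt FsA0 Fs_cauchy.
have A1k : forall k n, a k (zit phi psi n x) <= b k.
  move=> k n; exact: (A1 Xcpt psiK x (FsA0 k) n).
have ca : forall y, cvgn (a ^~ y).
  move=> y; apply: cauchy_le => e e0; have [N hN] := hac e e0.
  by exists N => m n hm hn; exact: hN.
have hbc : forall e : R, 0 < e -> exists N, forall m n, (N <= m)%N -> (N <= n)%N -> b m <= b n + e.
  move=> e e0; have [N hN] := hac e e0; exists N => m n hm hn.
  apply: (A2' Xcpt psiK (x:=x) (FsA0 m)) => n'.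
  apply: le_trans (hN m n hm hn _) _; rewrite lerD2r; exact: A1k.
have cb : cvgn b by exact: cauchy_le.
have -> : norm_Pi_x phi psi x Fs = limn b by [].
pose Lf y := limn (a ^~ y).
have -> : [set norm_pi_y phi y Fs | y in zorbit phi psi x] = [set Lf y | y in zorbit phi psi x] by [].
set Sset := [set Lf y | y in zorbit phi psi x].
have closeL : forall e : R, 0 < e -> exists N, forall k, (N <= k)%N ->
    (forall y, Lf y <= a k y + e /\ a k y <= Lf y + e) /\
    (limn b <= b k + e /\ b k <= limn b + e).
  move=> e e0; have [N1 hN1] := hac e e0; have [N2 hN2] := hbc e e0.
  exists (maxn N1 N2) => k hk.
  have k1 : (N1 <= k)%N by apply: leq_trans hk; exact: leq_maxl.
  have k2 : (N2 <= k)%N by apply: leq_trans hk; exact: leq_maxr.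
  split.
    move=> y; apply: (lim_close (N:=N1)) => // m n hm hn; exact: hN1.
  by apply: (lim_close (N:=N2)).
have main : forall e : R, 0 < e -> sup Sset <= limn b + e /\ limn b <= sup Sset + e.
  move=> e e0.
  have e3 : 0 < e / 3 by rewrite divr_gt0.
  have [N hN] := closeL (e / 3) e3.
  have [hL hB] := hN N (leqnn N).
  have ne : Sset !=set0 by exists (Lf x), x => //; exists 0.
  have ubS : forall y, zorbit phi psi x y -> Lf y <= b N + e / 3.
    move=> y [n _ <-]; apply: le_trans (proj1 (hL _)) _; rewrite lerD2r; exact: A1k.
  have hs : has_sup Sset.
    split => //; exists (b N + e / 3) => _ [y hy <-]; exact: ubS.
  split.
    apply: ge_sup => // _ [y hy <-].
    apply: le_trans (ubS y hy) _.
    have := proj2 hB; lra.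
  have hbS : b N <= sup Sset + e / 3.
    apply: (A2' Xcpt psiK (x:=x) (FsA0 N)) => n.
    apply: le_trans (proj2 (hL _)) _; rewrite lerD2r.
    apply: sup_upper_bound => //; exists (zit phi psi n x) => //; by exists n.
  have := proj1 hB; lra.
apply/eqP; rewrite eq_le; apply/andP; split.
  apply/ler_addgt0Pr => e e0; exact: (proj2 (main e e0)).
apply/ler_addgt0Pr => e e0; exact: (proj1 (main e e0)).
Qed.
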